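(* Let $n\ge 3$. The spectral radius of the super compacted matrix $\mathsf{SC}_n$ is the largest real root of the polynomial \[ Q_n(x) = x^{n} - 2(n-1)\sum_{j=1}^{n-1} x^{j} + 1. \]
   Context: The super compacted matrix of rank $n$ is the $n\times n$ matrix $\mathsf{SC}_n=(s_{ij})$ with: $s_{ij}=1$ if ($i\le n-2$ and $j=i+1$) or $i=n$; $s_{ij}=2$ if $i=n-2$ and $j=n$; $s_{ij}=2n-3$ if $i=n-1$ and $j<n$; $s_{ij}=2n-4$ if $i=n-1$ and $j=n$; $s_{ij}=0$ otherwise. *)

(* Defs.v *)
From mathcomp Require Import all_boot all_order all_algebra all_field.
Set Implicit Arguments. Unset Strict Implicit. Unset Printing Implicit Defensive.
Import Order.TTheory GRing.Theory Num.Theory.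
Local Open Scope ring_scope.

(* Super compacted matrix SC_n over the algebraic complex numbers algC.
   Row/column index i : 'I_n corresponds to the paper's 1-based index i+1. *)
Definition SC (n : nat) : 'M[algC]_n :=
  \matrix_(i < n, j < n)
    let a := i.+1 in let b := j.+1 in
    if ((a <= n - 2)%N && (b == a.+1)) || (a == n) then 1
    else if (a == n - 2)%N && (b == n) then 2
    else if (a == n - 1)%N && (b < n)%N then ((2 * n - 3)%N)%:R
    else if (a == n - 1)%N && (b == n) then ((2 * n - 4)%N)%:R
    else 0.

Definition Qpoly (n : nat) : {poly algC} :=
  'X^n - ((2 * (n - 1))%N)%:R *: (\sum_(1 <= j < n) 'X^j) + 1.

Definition is_spectral_radius (n : nat) (A : 'M[algC]_n) (r : algC) : Prop :=
  (exists2 l : algC, eigenvalue A l & `|l| = r) /\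
  (forall mu : algC, eigenvalue A mu -> `|mu| <= r).

Definition is_largest_real_root (p : {poly algC}) (r : algC) : Prop :=
  [/\ r \is Num.real, root p r &
      forall x : algC, x \is Num.real -> root p x -> x <= r].

(* Main.v *)
Require Import Defs.
From mathcomp Require Import all_boot all_order all_algebra all_field.
From mathcomp Require Import ring lra zify.
Import Order.TTheory GRing.Theory Num.Theory.
Set Implicit Arguments. Unset Strict Implicit. Unset Printing Implicit Defensive.
Local Open Scope ring_scope.
Lemma char_poly_tr (F : fieldType) n (A : 'M[F]_n) : char_poly A^T = char_poly A.
Proof.
rewrite /char_poly -det_tr; congr (\det _); apply/matrixP => i j.
by rewrite !mxE; case: eqP => [->|]; case: eqP => // ->.
Qed.

Lemma eig_right (F : fieldType) n (A : 'M[F]_n) (v : 'cV_n) x :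
  A *m v = x *: v -> v != 0 -> eigenvalue A x.
Proof.
move=> Av v0; rewrite eigenvalue_root_char -char_poly_tr -eigenvalue_root_char.
apply/eigenvalueP; exists v^T; last by rewrite trmx_eq0.
by rewrite -trmx_mul Av linearZ.
Qed.

Lemma geo (R : comNzRingType) (x : R) k :
  x * (\sum_(j < k) x ^+ j) + 1 = \sum_(j < k) x ^+ j + x ^+ k.
Proof.
elim: k => [|k IH]; first by rewrite big_ord0 mulr0 add0r.
by rewrite big_ord_recr /= mulrDr -addrA (addrC _ 1) addrA IH exprS; ring.
Qed.

Definition sc (R : nzRingType) m (i j : nat) : R :=
 if (i < m)%N then (if j == i.+1 then 1 else 0)
 else if i == m then (if j == m.+1 then 1 else if j == m.+2 then 2 else 0)
 else if i == m.+1 then (if j == m.+2 then (2 * m + 2)%:R else (2 * m + 3)%:R)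
 else 1.

Lemma SC_entry m (i j : 'I_(m.+3)) : SC m.+3 i j = sc algC m i j.
Proof.
rewrite mxE /sc.
have hi := ltn_ord i; have hj := ltn_ord j.
move: (nat_of_ord i) (nat_of_ord j) hi hj => a b ha hb.
have -> : (m.+3 - 2 = m.+1)%N by lia.
have -> : (m.+3 - 1 = m.+2)%N by lia.
have -> : (2 * m.+3 - 3 = 2 * m + 3)%N by lia.
have -> : (2 * m.+3 - 4 = 2 * m + 2)%N by lia.
by repeat (case: ifP => ?); try lia.
Qed.

Definition Tsum (R : nzRingType) (x : R) k := \sum_(j < k) x ^+ j.
Definition wv (R : fieldType) m (x : R) := Tsum x m.+2 / (x + 1).
Definition vf (R : fieldType) m (x : R) (k : nat) : R :=
  if (k <= m)%N then x ^+ k else if k == m.+1 then x ^+ m.+1 - 2 * wv m x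
  else wv m x.

Lemma sum_ind (R : nzRingType) N k (F : nat -> R) : (k < N)%N ->
  \sum_(j < N) (if (j : nat) == k then 1 else 0) * F j = F k.
Proof.
move=> hk; rewrite (bigD1 (Ordinal hk)) //= eqxx mul1r big1 ?addr0 // => j hj.
case: eqP => [e|]; last by rewrite mul0r.
by move/eqP: hj; case; apply/val_inj.
Qed.

Lemma eig_eq (R : fieldType) m (x : R) : x + 1 != 0 ->
  x ^+ m.+3 - (2 * m + 4)%:R * (x * Tsum x m.+2) + 1 = 0 ->
  forall i, (i < m.+3)%N ->
  \sum_(j < m.+3) sc R m i j * vf m x j = x * vf m x i.
Proof.
move=> hx hQ i hi.
rewrite 2!big_ord_recr /=.
have hS : forall F : nat -> R, \sum_(j < m.+1) F j * vf m x j = \sum_(j < m.+1) F j * x ^+ j.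
  by move=> F; apply: eq_bigr => j _; rewrite /vf -ltnS ltn_ord.
rewrite hS.
set S := \sum_(j < m.+1) x ^+ j.
have hT : Tsum x m.+2 = S + x ^+ m.+1 by rewrite /Tsum big_ord_recr.
have E1 : (x + 1) * wv m x - (S + x ^+ m.+1) = 0.
  by rewrite /wv -hT mulrC divfK // subrr.
have E2 : x * (S + x ^+ m.+1) + 1 - (S + x ^+ m.+1 + x * x ^+ m.+1) = 0.
  by rewrite -hT -exprS /Tsum geo subrr.
rewrite hT in hQ.
rewrite /vf /=. 
have h1 : (m.+1 <= m)%N = false by lia.
have h2 : (m.+2 <= m)%N = false by lia.
rewrite h1 h2 eqxx.
have -> : (m.+2 == m.+1) = false by lia.
set w := wv m x. set Y := x ^+ m.+1.
have hY : x ^+ m.+3 = x * (x * Y) by rewrite /Y !exprS.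
rewrite hY in hQ.
rewrite -/Y -/w in E1 E2 hQ.
rewrite /sc.
have : ((i < m)%N \/ i = m \/ i = m.+1 \/ i = m.+2) by lia.
case=> [h|[->|[->|->]]].
- rewrite h sum_ind; last by lia.
  have -> : (m.+1 == i.+1) = false by lia.
  have -> : (m.+2 == i.+1) = false by lia.
  have -> : (i <= m)%N by lia.
  by rewrite !mul0r !addr0 exprS.
- rewrite ltnn eqxx.
  rewrite big1 ?add0r; last first.
    move=> j _; have hj := ltn_ord j.
    have -> : ((j : nat) == m.+1) = false by lia.
    have -> : ((j : nat) == m.+2) = false by lia.
    by rewrite mul0r.
  rewrite eqxx.
  have -> : (m.+2 == m.+1) = false by lia.
  rewrite leqnn /Y exprS eqxx; ring.
- have e1 : (m.+1 == m) = false by lia.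
  have e2 : (m.+1 == m.+2) = false by lia.
  rewrite h2 e1 e2 eqxx h1.
  rewrite (eq_bigr (fun j : 'I_m.+1 => (2 * m + 3)%:R * x ^+ j)); last first.
    move=> j _; have hj := ltn_ord j.
    by have -> : ((j : nat) == m.+2) = false by lia.
  rewrite -big_distrr /= -/S eqxx.
  apply/eqP; rewrite -subr_eq0 -[_ - _](mulfK hx) mulf_eq0 invr_eq0 (negPf hx) orbF.
  apply/eqP.
  have -> : ((2 * m + 3)%:R * S + (2 * m + 3)%:R * (Y - 2 * w) + (2 * m + 2)%:R * w -
    x * (Y - 2 * w)) * (x + 1) =
    (2 * x - 2 * m%:R - 4) * ((x + 1) * w - (S + Y)) +
    (x * (S + Y) + 1 - (S + Y + x * Y)) -
    (x * (x * Y) - (2 * m + 4)%:R * (x * (S + Y)) + 1) by ring.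
  by rewrite E1 E2 hQ; ring.
- have e1 : (m.+2 < m)%N = false by lia.
  have e2 : (m.+2 == m) = false by lia.
  have e3 : (m.+2 == m.+1) = false by lia.
  rewrite e1 e2 e3 h2.
  under eq_bigr do rewrite mul1r.
  rewrite -/S !mul1r; apply/eqP; rewrite -subr_eq0; apply/eqP.
  have -> : S + (Y - 2 * w) + w - x * w = - ((x + 1) * w - (S + Y)) by ring.
  by rewrite E1 oppr0.
Qed.

Lemma vf_pos (R : realFieldType) m (x : R) : 3 <= x -> forall k, 0 < vf m x k.
Proof.
move=> x3 k.
have x0 : 0 < x by lra.
have hT : 1 <= Tsum x m.+2.
  rewrite /Tsum big_ord_recl expr0 lerDl; apply: sumr_ge0 => i _.
  by apply: exprn_ge0; lra.
have hw : 0 < wv m x by rewrite /wv divr_gt0 //; lra.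
rewrite /vf; case: ifP => _; first exact: exprn_gt0.
case: ifP => _ //.
set S := \sum_(j < m.+1) x ^+ j.
have hT2 : Tsum x m.+2 = S + x ^+ m.+1 by rewrite /Tsum big_ord_recr.
have G := geo x m.+1; rewrite -/S in G.
have E : (x + 1) * wv m x = S + x ^+ m.+1.
  by rewrite /wv -hT2 mulrC divfK //; apply/lt0r_neq0; lra.
have S0 : 0 <= S by apply: sumr_ge0 => i _; apply: exprn_ge0; lra.
have Y1 : 1 <= x ^+ m.+1 by apply: exprn_ege1; lra.
set Y := x ^+ m.+1 in G E Y1 *. set w := wv m x in E hw *.
nra.
Qed.

Definition QR (R : nzRingType) (n : nat) : {poly R} :=
  'X^n - ((2 * (n - 1))%N)%:R *: (\sum_(1 <= j < n) 'X^j) + 1.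

Lemma hornerQ (R : comNzRingType) m (x : R) :
  (QR R m.+3).[x] = x ^+ m.+3 - (2 * m + 4)%:R * (x * Tsum x m.+2) + 1.
Proof.
rewrite /QR !hornerE horner_sum big_add1 /= big_mkord /Tsum.
have -> : (2 * (m.+3 - 1) = 2 * m + 4)%N by lia.
rewrite big_distrr big_distrr /=; congr (_ - _ + _).
by apply: eq_bigr => i _; rewrite !hornerE exprS mulrA.
Qed.

Lemma Q_at3 (R : realFieldType) m :
  3 ^+ m.+3 - (2 * m + 4)%:R * (3 * Tsum (3 : R) m.+2) + 1 <= 0.
Proof.
have G : 3 * Tsum (3 : R) m.+2 + 1 = Tsum (3 : R) m.+2 + 3 ^+ m.+2 := geo _ _.
have Z9 : 9 <= (3 : R) ^+ m.+2.
  rewrite !exprS mulrA; have : 1 <= (3 : R) ^+ m by apply: exprn_ege1; lra.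
  nra.
have c4 : 4 <= (2 * m + 4)%:R :> R by rewrite natrD natrM; have := ler0n R m; lra.
rewrite exprS.
move: G Z9 c4.
set Z := (3 : R) ^+ m.+2. set T := Tsum _ _. set c := (2 * m + 4)%:R.
move=> G Z9 c4.
have T0 : 0 <= T by lra.
have : 0 <= (c - 4) * T by apply: mulr_ge0; lra.
lra.
Qed.

Lemma Q_atc (R : realFieldType) m :
  0 <= (2 * m + 5)%:R ^+ m.+3 - (2 * m + 4)%:R * ((2 * m + 5)%:R * Tsum ((2 * m + 5)%:R : R) m.+2) + 1.
Proof.
have G : (2 * m + 5)%:R * Tsum ((2 * m + 5)%:R : R) m.+2 + 1 = Tsum ((2 * m + 5)%:R : R) m.+2 + (2 * m + 5)%:R ^+ m.+2 := geo _ _.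
have c4 : 4 <= (2 * m + 4)%:R :> R by rewrite natrD natrM; have := ler0n R m; lra.
have e : (2 * m + 5)%:R = (2 * m + 4)%:R + 1 :> R by rewrite natr1 -addnS.
rewrite exprS; move: G c4; rewrite e.
set c := (2 * m + 4)%:R.
set Z := (c + 1) ^+ m.+2. set T := Tsum _ _.
move=> G c4.
have cT : c * T = Z - 1.
  apply/eqP; rewrite -subr_eq0; apply/eqP.
  have -> : c * T - (Z - 1) = (c + 1) * T + 1 - (T + Z) by ring.
  by rewrite G subrr.
have -> : (c + 1) * Z - c * ((c + 1) * T) + 1 = (c + 1) * (Z - c * T) + 1 by ring.
rewrite cT.
have -> : (c + 1) * (Z - (Z - 1)) + 1 = c + 2 by ring.
lra.
Qed.

Lemma algR_le (a b : algR) : (a <= b) = (algRval a <= algRval b).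
Proof. by []. Qed.
Lemma algR_lt (a b : algR) : (a < b) = (algRval a < algRval b).
Proof. by []. Qed.

Lemma Tsum_val (a : algR) k : algRval (Tsum a k) = Tsum (algRval a) k.
Proof. by rewrite /Tsum rmorph_sum; apply: eq_bigr => i _; rewrite rmorphXn. Qed.

Lemma vf_val m (a : algR) k : algRval (vf m a k) = vf m (algRval a) k.
Proof.
rewrite /vf /wv; case: ifP => _; first by rewrite rmorphXn.
have hw : algRval (Tsum a m.+2 / (a + 1)) = Tsum (algRval a) m.+2 / (algRval a + 1).
  by rewrite fmorph_div /= Tsum_val ?rmorphD ?rmorph1.
case: ifP => _ //.
rewrite rmorphB rmorphM; congr (_ - _ * _); first [exact: rmorphXn | exact: hw | done].
Qed.

Lemma Q_val m (a : algR) :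
  algRval (a ^+ m.+3 - (2 * m + 4)%:R * (a * Tsum a m.+2) + 1) =
  algRval a ^+ m.+3 - (2 * m + 4)%:R * (algRval a * Tsum (algRval a) m.+2) + 1.
Proof.
rewrite rmorphD rmorphB rmorphXn !rmorphM rmorph_nat rmorph1.
by congr (_ - _ * (_ * _) + _); exact: Tsum_val.
Qed.

Lemma perron N (A : 'M[algC]_N) (p : 'cV_N) r :
  (forall i j, 0 <= A i j) -> (forall i, 0 < p i 0) -> A *m p = r *: p ->
  forall mu, eigenvalue A mu -> `|mu| <= r.
Proof.
move=> A0 p0 Ap mu /eigenvalueP [u uA u0].
set s := \sum_j `|u 0 j| * p j 0.
have s0 : 0 < s.
  case: (pickP (fun j => u 0 j != 0)) => [j uj | h]; last first.
    case/eqP: u0; apply/rowP => j; move/negbFE: (h j) => /eqP ->; by rewrite mxE.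
  rewrite /s (bigD1 j) //=.
  have ha : 0 < `|u 0 j| * p j 0 by rewrite mulr_gt0 // normr_gt0.
  apply: (lt_le_trans ha); rewrite lerDl; apply: sumr_ge0 => i _.
  by rewrite mulr_ge0 // ltW.
have key : `|mu| * s <= r * s.
  rewrite /s !big_distrr /=.
  have E1 : \sum_j `|mu| * (`|u 0 j| * p j 0) = \sum_j `|(u *m A) 0 j| * p j 0.
    by apply: eq_bigr => j _; rewrite uA mxE normrM mulrA.
  rewrite E1.
  have E2 : \sum_j `|(u *m A) 0 j| * p j 0 <= \sum_j (\sum_i `|u 0 i| * A i j) * p j 0.
    apply: ler_sum => j _; apply: ler_wpM2r; first exact: ltW.
    rewrite mxE.
    apply: (le_trans (ler_norm_sum _ _ _)); apply: ler_sum => i _.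
    by rewrite normrM (ger0_norm (A0 i j)).
  apply: (le_trans E2).
  rewrite (eq_bigr (fun j => \sum_i `|u 0 i| * A i j * p j 0)); last by move=> j _; rewrite big_distrl.
  rewrite exchange_big /= le_eqVlt; apply/orP; left; apply/eqP.
  apply: eq_bigr => i _.
  have := congr1 (fun M : 'cV_N => M i 0) Ap; rewrite !mxE => h.
  rewrite mulrCA -h big_distrr; apply: eq_bigr => j _; by rewrite -mulrA.
by rewrite ler_pM2r in key.
Qed.

Definition pv m (x : algC) : 'cV[algC]_(m.+3) := \col_(i < m.+3) vf m x i.

Lemma SC_pv m (x : algC) : x + 1 != 0 ->
  x ^+ m.+3 - (2 * m + 4)%:R * (x * Tsum x m.+2) + 1 = 0 ->
  SC m.+3 *m pv m x = x *: pv m x.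
Proof.
move=> hx hQ; apply/matrixP => i j; rewrite (ord1 j) !mxE.
rewrite -(eig_eq hx hQ (ltn_ord i)); apply: eq_bigr => k _.
by rewrite SC_entry mxE.
Qed.

Lemma pv_neq0 m (x : algC) : pv m x != 0.
Proof.
apply/negP => /eqP /matrixP /(_ ord0 ord0); rewrite !mxE /vf /= expr0.
by move/eqP; rewrite oner_eq0.
Qed.

Lemma SC_ge0 m (i j : 'I_m.+3) : 0 <= SC m.+3 i j.
Proof.
rewrite SC_entry /sc; by repeat case: ifP => _; rewrite ?ler0n ?ler01 ?lexx.
Qed.

Unset Implicit Arguments.
Theorem proposition6p3 (n : nat) (hn : (3 <= n)%N) :
  exists r : algC, is_spectral_radius (SC n) r /\ is_largest_real_root (Qpoly n) r.
Proof.
case: n hn => [|[|[|m]]] // _.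
have [rR /andP [r3 _] rootr] : exists2 x : algR, 3 <= x <= (2 * m + 5)%:R & root (QR algR m.+3) x.
  apply: poly_ivt; first by rewrite ler_nat; lia.
  by rewrite !hornerQ Q_at3 Q_atc.
have hQr : algRval rR ^+ m.+3 - (2 * m + 4)%:R * (algRval rR * Tsum (algRval rR) m.+2) + 1 = 0.
  by rewrite -Q_val -hornerQ (eqP rootr) rmorph0.
set r := algRval rR in hQr *.
have r3' : 3 <= r.
  by move: r3; rewrite algR_le (_ : algRval 3 = 3) // rmorph_nat.
have r_gt0 : 0 < r by apply: (lt_le_trans _ r3'); rewrite ltr0n.
have hr1 : r + 1 != 0 by apply/lt0r_neq0; rewrite addr_gt0 // ltr01.
have Av := SC_pv hr1 hQr.
have ppos : forall i, 0 < pv m r i 0.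
  move=> i; rewrite mxE /r -vf_val.
  by have := @vf_pos _ m _ r3 i; rewrite algR_lt.
have r0 : 0 <= r by exact: ltW.
have bound := perron (@SC_ge0 m) ppos Av.
have QE : Qpoly m.+3 = QR algC m.+3 by [].
exists r; split; first split.
- exists r; last by rewrite ger0_norm.
  exact: eig_right Av (pv_neq0 m r).
- exact: bound.
split.
- exact: ger0_real.
- by rewrite QE /root hornerQ hQr.
- move=> x xR; rewrite QE /root hornerQ => /eqP hx.
  have [-> | hx1] := eqVneq x (-1).
    by apply: le_trans r0; rewrite oppr_le0 ler01.
  have hx1' : x + 1 != 0 by rewrite addr_eq0.
  have ex := eig_right (SC_pv hx1' hx) (pv_neq0 m x).
  exact: le_trans (real_ler_norm xR) (bound _ ex).
Qed.
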